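(* Let $G$ be a finite group and $f \ge 0$. Call an irreducible representation $\lambda$ of $G$ $f$-smooth if $\sum_{g \in G} \left|\chi_\lambda(g)/d_\lambda\right|^4 \le f$. Let $\lambda,\mu,\lambda',\mu'$ be irreducible representations of $G$, and suppose $\lambda$ and $\mu$ are $f$-smooth. Then \[ P_{\rm coll}^{\lambda\otimes\mu,\lambda'\otimes\mu'} \le \frac{\max_\tau d_\tau}{\sqrt{|G|}}\sqrt{f}, \] where the maximum is over irreducible representations $\tau$ of $G$.
   Context: For irreps $\lambda,\mu,\tau$ of a finite group $G$, with characters $\chi$ and dimensions $d$, the natural distribution on irreps in $\lambda\otimes\mu$ is $P^{\lambda\otimes\mu}_\tau = \frac{d_\tau}{d_\lambda d_\mu}\langle \chi_\tau, \chi_\lambda\chi_\mu\rangle_G$, where $\langle \phi,\psi\rangle_G = \frac{1}{|G|}\sum_{g\in G}\phi(g)\psi(g)^*$. The collision probability is $P_{\rm coll}^{\lambda\otimes\mu,\lambda'\otimes\mu'} = \sum_\tau P^{\lambda\otimes\mu}_\tau P^{\lambda'\otimes\mu'}_\tau$, summing over all irreps $\tau$ of $G$. *)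

(* Defs.v *)
From mathcomp Require Import all_boot all_order all_algebra all_fingroup all_solvable all_field all_character.
Set Implicit Arguments. Unset Strict Implicit. Unset Printing Implicit Defensive.
Import Order.TTheory GRing.Theory Num.Theory.
Local Open Scope ring_scope.

Definition irr_dim (gT : finGroupType) (G : {group gT}) (i : Iirr G) : algC :=
  'chi[G]_i 1%g.

Definition Ptensor (gT : finGroupType) (G : {group gT}) (lam mu tau : Iirr G) : algC :=
  irr_dim tau / (irr_dim lam * irr_dim mu) * '['chi[G]_tau, 'chi[G]_lam * 'chi[G]_mu].

Definition Pcoll (gT : finGroupType) (G : {group gT}) (lam mu lam' mu' : Iirr G) : algC :=
  \sum_(tau : Iirr G) Ptensor lam mu tau * Ptensor lam' mu' tau.

Definition smooth (gT : finGroupType) (G : {group gT}) (f : algC) (lam : Iirr G) : bool :=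
  \sum_(g in G) `|'chi[G]_lam g / irr_dim lam| ^+ 4 <= f.

Definition max_dim (gT : finGroupType) (G : {group gT}) : algC :=
  \big[Num.max/0]_(tau : Iirr G) irr_dim tau.

(* Main.v *)
Require Import Defs.
From mathcomp Require Import all_boot all_order all_algebra all_fingroup all_solvable all_field all_character.
From mathcomp Require Import ring.
Import Order.TTheory GRing.Theory Num.Theory.
Local Open Scope ring_scope.

Lemma amgm (a b : algC) : 0 <= a -> 0 <= b -> a ^+ 2 * b ^+ 2 <= (a ^+ 4 + b ^+ 4) / 2.
Proof.
move=> a0 b0.
have r : a ^+ 2 - b ^+ 2 \is Num.real by rewrite rpredB // ?rpredX // ger0_real.
have h : 0 <= (a ^+ 2 - b ^+ 2) ^+ 2 by rewrite -real_normK // exprn_ge0.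
rewrite ler_pdivlMr ?ltr0n // -subr_ge0.
have -> : (a ^+ 4 + b ^+ 4 - a ^+ 2 * b ^+ 2 * 2) = (a ^+ 2 - b ^+ 2) ^+ 2.
  by ring.
done.
Qed.

Lemma dim_gt0 {gT} {G : {group gT}} (i : Iirr G) : 0 < irr_dim i.
Proof. exact: irr1_gt0. Qed.

Lemma normS gT (G : {group gT}) (f : algC) (lam mu : Iirr G) :
  smooth f lam -> smooth f mu ->
  \sum_(g in G) `|('chi[G]_lam * 'chi_mu)%R g| ^+ 2 <= (irr_dim lam * irr_dim mu) ^+ 2 * f.
Proof.
rewrite /smooth => hl hm.
set dl := irr_dim lam; set dm := irr_dim mu.
have dl0 := dim_gt0 lam; have dm0 := dim_gt0 mu.
have -> : \sum_(g in G) `|('chi[G]_lam * 'chi_mu)%R g| ^+ 2 =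
   (dl * dm) ^+ 2 * \sum_(g in G) (`|'chi[G]_lam g / dl| ^+ 2 * `|'chi[G]_mu g / dm| ^+ 2).
  rewrite mulr_sumr; apply: eq_bigr => g _.
  rewrite cfunE !normrM !normfV (gtr0_norm dl0) (gtr0_norm dm0).
  rewrite !exprMn !exprVn.
  rewrite /dl /dm; field.
  by rewrite !gt_eqF.
apply: ler_wpM2l; first by rewrite exprn_ge0 // mulr_ge0 // ltW.
apply: (@le_trans _ _ ((\sum_(g in G) (`|'chi[G]_lam g / dl| ^+ 4 + `|'chi[G]_mu g / dm| ^+ 4)) / 2)).
  by rewrite mulr_suml; apply: ler_sum => g _; apply: amgm.
rewrite big_split /= ler_pdivrMr ?ltr0n // mulr_natr mulr2n.
exact: lerD.
Qed.

Lemma cnat gT (G : {group gT}) (lam mu tau : Iirr G) :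
  '['chi[G]_tau, 'chi_lam * 'chi_mu] \in Num.nat.
Proof. by rewrite Cnat_cfdot_char ?irr_char ?rpredM ?irr_char. Qed.

Lemma Pbound gT (G : {group gT}) (f : algC) (hf : 0 <= f) (lam mu tau : Iirr G) :
  smooth f lam -> smooth f mu ->
  Ptensor lam mu tau <= irr_dim tau * sqrtC f / sqrtC (#|G|%:R).
Proof.
move=> hl hm.
have dl0 := dim_gt0 lam; have dm0 := dim_gt0 mu; have dt0 := dim_gt0 tau.
set c := '['chi[G]_tau, 'chi_lam * 'chi_mu].
have c0 : 0 <= c by apply: natr_ge0; apply: cnat.
have G0 : 0 < #|G|%:R :> algC by rewrite ltr0n cardG_gt0.
have sG0 : 0 < sqrtC (#|G|%:R) :> algC by rewrite sqrtC_gt0.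
have hc : c * sqrtC (#|G|%:R) <= irr_dim lam * irr_dim mu * sqrtC f.
  apply: (@le_trans _ _ (sqrtC '['chi[G]_lam * 'chi_mu] * sqrtC (#|G|%:R))).
    apply: ler_wpM2r; first exact: ltW.
    rewrite -(ger0_norm c0).
    have [h _] := cfCauchySchwarz_sqrt ('chi[G]_tau) ('chi_lam * 'chi_mu).
    by move: h; rewrite cfnorm_irr sqrtC1 mul1r.
  have dl0' := ltW dl0; have dm0' := ltW dm0.
  rewrite -sqrtCM ?qualifE /= ?cfnorm_ge0 ?ler0n //.
  rewrite (cfnormE (cfun_onG _)) mulrC mulrA mulfV ?gt_eqF // mul1r.
  have -> : irr_dim lam * irr_dim mu * sqrtC f = sqrtC ((irr_dim lam * irr_dim mu) ^+ 2 * f).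
    by rewrite sqrtCM ?qualifE /= ?exprn_ge0 ?mulr_ge0 // sqrCK // mulr_ge0.
  rewrite ler_sqrtC ?qualifE /= ?mulr_ge0 ?exprn_ge0 ?mulr_ge0 //.
    exact: normS.
  by apply: sumr_ge0 => g _; rewrite exprn_ge0.
rewrite /Ptensor -/c.
set dl := irr_dim lam; set dm := irr_dim mu; set dt := irr_dim tau; set sG := sqrtC (#|G|%:R).
have -> : dt / (dl * dm) * c = dt / (dl * dm * sG) * (c * sG).
  by field; rewrite !gt_eqF.
have -> : dt * sqrtC f / sG = dt / (dl * dm * sG) * (dl * dm * sqrtC f).
  by field; rewrite !gt_eqF.
apply: ler_wpM2l => //.
by rewrite divr_ge0 ?mulr_ge0 // ltW.
Qed.

Lemma P_ge0 gT (G : {group gT}) (lam mu tau : Iirr G) : 0 <= Ptensor lam mu tau.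
Proof.
apply: mulr_ge0; last by apply: natr_ge0; apply: cnat.
by rewrite divr_ge0 ?mulr_ge0 // ltW // dim_gt0.
Qed.

Lemma P_sum gT (G : {group gT}) (lam mu : Iirr G) : \sum_tau Ptensor lam mu tau = 1.
Proof.
have dl0 := dim_gt0 lam; have dm0 := dim_gt0 mu.
set psi := 'chi[G]_lam * 'chi_mu.
have Npsi : psi \is a character by rewrite rpredM ?irr_char.
have e : \sum_(tau : Iirr G) irr_dim tau * '['chi[G]_tau, psi] = irr_dim lam * irr_dim mu.
  have := congr1 (fun phi : 'CF(G) => phi 1%g) (cfun_sum_cfdot psi).
  rewrite /= sum_cfunE cfunE => ->.
  apply: eq_bigr => i _; rewrite cfunE mulrC cfdotC_char ?irr_char //.
rewrite /Ptensor.
under eq_bigr => tau _ do rewrite mulrAC.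
by rewrite -mulr_suml e mulfV // mulf_neq0 // gt_eqF.
Qed.

Lemma max_ge (x y : algC) : 0 <= x -> 0 <= y ->
  [/\ 0 <= Num.max x y, x <= Num.max x y & y <= Num.max x y].
Proof.
move=> x0 y0.
have c : (x >=< y)%O by apply: real_leVge; apply: ger0_real.
rewrite (comparable_maxEgt c); case: ifP => h.
  by split=> //; apply: ltW.
split=> //.
move: h; rewrite real_ltNge ?ger0_real //. by move/negbFE.
Qed.

Lemma dim_le_max gT (G : {group gT}) (tau : Iirr G) : irr_dim tau <= max_dim G.
Proof.
rewrite /max_dim.
have : tau \in index_enum (Iirr G) by rewrite mem_index_enum.
elim: (index_enum (Iirr G)) => // x s IH.
have [r0 rs] : 0 <= \big[Num.max/0]_(i <- s) irr_dim i /\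
   (forall t, t \in s -> irr_dim t <= \big[Num.max/0]_(i <- s) irr_dim i).
  elim: s {IH} => [|y s [h1 h2]]; first by rewrite big_nil.
  rewrite big_cons; have [a b c] := max_ge _ _ (ltW (dim_gt0 y)) h1.
  split=> // t; rewrite inE => /orP [/eqP -> //| /h2 h]; exact: le_trans h c.
rewrite inE big_cons; have [a b c] := max_ge _ _ (ltW (dim_gt0 x)) r0.
case/orP => [/eqP -> //| /rs h]; exact: le_trans h c.
Qed.

Theorem lemma1 (gT : finGroupType) (G : {group gT}) (f : algC) (hf : 0 <= f)
  (lam mu lam' mu' : Iirr G) (hlam : smooth f lam) (hmu : smooth f mu) :
  Pcoll lam mu lam' mu' <= max_dim G / sqrtC (#|G|%:R) * sqrtC f.
Proof.
set M := max_dim G / sqrtC (#|G|%:R) * sqrtC f.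
rewrite /Pcoll.
apply: (@le_trans _ _ (\sum_(tau : Iirr G) M * Ptensor lam' mu' tau)).
  apply: ler_sum => tau _; apply: ler_wpM2r; first exact: P_ge0.
  apply: le_trans (Pbound _ _ _ hf _ _ tau hlam hmu) _.
  rewrite /M mulrAC; apply: ler_wpM2r; first by rewrite sqrtC_ge0.
  apply: ler_wpM2r; first by rewrite invr_ge0 sqrtC_ge0 ler0n.
  exact: dim_le_max.
by rewrite -mulr_sumr P_sum mulr1.
Qed.
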